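(* Let $\mathbb{F}_3$ be the free group on $a,b,c$, let $r = aba^{-1}b^{-1}c$ and $N$ its normal closure. Let $R = \{r_1^{\pm1},\dots,r_5^{\pm1}\}$ where $r_1 = aba^{-1}b^{-1}c$, $r_2 = ba^{-1}b^{-1}ca$, $r_3 = a^{-1}b^{-1}cab$, $r_4 = b^{-1}caba^{-1}$, $r_5 = caba^{-1}b^{-1}$. A piece is an initial subword of some element of $R$. Then every nontrivial cyclically reduced word $w \in N$ contains (as a subword) a piece of length $4$. *)

(* Defs.v *)
From mathcomp Require Import all_boot.
From Stdlib Require Import Relation_Operators.

Set Implicit Arguments.
Unset Strict Implicit.
Unset Printing Implicit Defensive.

(* A letter is a generator index (0 = a, 1 = b, 2 = c) with a sign
   (true = x, false = x^{-1}). *)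
Definition letter := ('I_3 * bool)%type.
Definition word := seq letter.

Definition linv (x : letter) : letter := (x.1, ~~ x.2).
Definition winv (w : word) : word := rev (map linv w).

Definition ga : 'I_3 := @Ordinal 3 0 isT.
Definition gb : 'I_3 := @Ordinal 3 1 isT.
Definition gc : 'I_3 := @Ordinal 3 2 isT.
Definition A : letter := (ga, true).
Definition Ai : letter := (ga, false).
Definition B : letter := (gb, true).
Definition Bi : letter := (gb, false).
Definition C : letter := (gc, true).
Definition Ci : letter := (gc, false).

Definition reduced (w : word) : Prop :=
  forall u v (x : letter), w <> u ++ x :: linv x :: v.

Definition nontriv_cyc_reduced (w : word) : Prop :=
  [/\ w <> [::], reduced w & last (head A w) w <> linv (head A w)].

Inductive fstep : word -> word -> Prop :=
| fstep_intro (u v : word) (x : letter) : fstep (u ++ x :: linv x :: v) (u ++ v).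

Definition freeeq : word -> word -> Prop := clos_refl_sym_trans word fstep.

Inductive in_nclosure (r : word) : word -> Prop :=
| N_nil : in_nclosure r [::]
| N_rel : in_nclosure r r
| N_relinv : in_nclosure r (winv r)
| N_cat u v : in_nclosure r u -> in_nclosure r v -> in_nclosure r (u ++ v)
| N_conj u w : in_nclosure r w -> in_nclosure r (u ++ w ++ winv u)
| N_eq u v : freeeq u v -> in_nclosure r u -> in_nclosure r v.

Definition r1 : word := [:: A; B; Ai; Bi; C].
Definition r2 : word := [:: B; Ai; Bi; C; A].
Definition r3 : word := [:: Ai; Bi; C; A; B].
Definition r4 : word := [:: Bi; C; A; B; Ai].
Definition r5 : word := [:: C; A; B; Ai; Bi].

Definition Rset : seq word :=
  [:: r1; r2; r3; r4; r5; winv r1; winv r2; winv r3; winv r4; winv r5].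

Definition piece (p : word) : Prop := exists2 s, s \in Rset & prefix p s.

(* Main.v *)
Require Import Defs.
From mathcomp Require Import all_boot.
From Stdlib Require Import Relation_Operators.

Set Implicit Arguments.
Unset Strict Implicit.
Unset Printing Implicit Defensive.

Definition phi (x : letter) : word :=
  if x.1 == gc then (if x.2 then [:: B; A; Bi; Ai] else [:: A; B; Ai; Bi])
  else [:: x].

Definition phiw (w : word) : word := flatten (map phi w).

Definition push (st : word) (z : letter) : word :=
  if st is h :: t then (if h == linv z then t else z :: st) else [:: z].

Definition stk (w : word) : word := foldl push [::] (phiw w).

Fixpoint safe (st y : word) : bool :=
  match y with
  | [::] => true
  | z :: y' => if st is [::] then false else safe (push st z) y'
  end.

Definition state := (word * word * bool)%type.

Definition P10 : seq word := map (take 4) Rset.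

Definition allowed (u : word) (x : letter) : bool :=
  (if u is h :: _ then h != linv x else true) && (rev (x :: u) \notin P10).

Definition next (s : state) (x : letter) : option state :=
  let: (u, st, fl) := s in
  let u' := take 3 (x :: u) in
  let ns := foldl push st (phi x) in
  if ns == [::] then None else
  if fl then (if size ns <= 3 then Some (u', ns, true) else Some (u', take 3 ns, false))
  else if safe st (phi x) then Some (u', take 3 ns, false) else None.

Definition letters : seq letter := [:: A; Ai; B; Bi; C; Ci].

Definition S : seq state := [::
([:: Ai], [:: Ai], true);
([:: Ai; Ai], [:: Ai; Ai], true);
([:: Ai; Ai; Ai], [:: Ai; Ai; Ai], false);
([:: Ai; Ai; Ai], [:: Ai; Ai; Ai], true);
([:: Ai; Ai; Bi], [:: Ai; Ai; Bi], false);
([:: Ai; Ai; Bi], [:: Ai; Ai; Bi], true);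
([:: Ai; Ai; Ci], [:: Ai; Ai; Bi], false);
([:: Ai; Ai; B], [:: Ai; Ai; Ai], false);
([:: Ai; Ai; B], [:: Ai; Ai; B], false);
([:: Ai; Ai; B], [:: Ai; Ai; B], true);
([:: Ai; Ai; C], [:: Ai; Ai; Ai], false);
([:: Ai; Bi], [:: Ai; Bi], true);
([:: Ai; Bi; Ai], [:: Ai; Bi; Ai], false);
([:: Ai; Bi; Ai], [:: Ai; Bi; Ai], true);
([:: Ai; Bi; Bi], [:: Ai; Bi; Bi], false);
([:: Ai; Bi; Bi], [:: Ai; Bi; Bi], true);
([:: Ai; Bi; Ci], [:: Ai; Bi; Bi], false);
([:: Ai; Bi; A], [:: Ai; Bi; Bi], false);
([:: Ai; Bi; A], [:: Ai; Bi; A], false);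
([:: Ai; Bi; A], [:: Ai; Bi; A], true);
([:: Ai; Bi; C], [:: Ai; Bi; Ai], false);
([:: Ai; Ci], [:: Ai; Bi; Ai], false);
([:: Ai; Ci; Ai], [:: Ai; Bi; Ai], false);
([:: Ai; Ci; Ai], [:: Ai; Bi; Ai], true);
([:: Ai; Ci; Bi], [:: Ai; Bi; Ai], false);
([:: Ai; Ci; Ci], [:: Ai; Bi; Ai], false);
([:: Ai; Ci; A], [:: Ai; Bi; Ai], false);
([:: Ai; Ci; B], [:: Ai; Bi; Ai], false);
([:: Ai; B], [:: Ai; B], true);
([:: Ai; B; Ai], [:: Ai; B; Ai], false);
([:: Ai; B; Ai], [:: Ai; B; Ai], true);
([:: Ai; B; Ci], [:: Ai; Ai; Ai], false);
([:: Ai; B; Ci], [:: Ai; Ai; Ai], true);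
([:: Ai; B; Ci], [:: Ai; Ai; B], false);
([:: Ai; B; Ci], [:: Ai; Ai; B], true);
([:: Ai; B; A], [:: Ai; B; A], false);
([:: Ai; B; A], [:: Ai; B; A], true);
([:: Ai; B; A], [:: Ai; B; B], false);
([:: Ai; B; B], [:: Ai; B; Ai], false);
([:: Ai; B; B], [:: Ai; B; A], false);
([:: Ai; B; B], [:: Ai; B; B], false);
([:: Ai; B; B], [:: Ai; B; B], true);
([:: Ai; B; C], [:: Ai; B; Ai], false);
([:: Ai; C], [:: Ai; Ai; Bi], false);
([:: Ai; C; Ai], [:: Ai; Ai; Bi], false);
([:: Ai; C; Bi], [:: Ai; Ai; Bi], false);
([:: Ai; C; Bi], [:: Ai; Ai; Bi], true);
([:: Ai; C; A], [:: Ai; Ai; Bi], false);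
([:: Ai; C; B], [:: Ai; Ai; Bi], false);
([:: Ai; C; C], [:: Ai; Ai; Bi], false);
([:: Bi], [:: Bi], true);
([:: Bi; Ai], [:: Bi; Ai], true);
([:: Bi; Ai; Ai], [:: Bi; Ai; Ai], false);
([:: Bi; Ai; Ai], [:: Bi; Ai; Ai], true);
([:: Bi; Ai; Bi], [:: Bi; Ai; Bi], false);
([:: Bi; Ai; Bi], [:: Bi; Ai; Bi], true);
([:: Bi; Ai; Ci], [:: Bi; Ai; Bi], false);
([:: Bi; Ai; B], [:: Bi; Ai; Ai], false);
([:: Bi; Ai; B], [:: Bi; Ai; B], false);
([:: Bi; Ai; B], [:: Bi; Ai; B], true);
([:: Bi; Ai; C], [:: Bi; Ai; Ai], false);
([:: Bi; Bi], [:: Bi; Bi], true);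
([:: Bi; Bi; Ai], [:: Bi; Bi; Ai], false);
([:: Bi; Bi; Ai], [:: Bi; Bi; Ai], true);
([:: Bi; Bi; Bi], [:: Bi; Bi; Bi], false);
([:: Bi; Bi; Bi], [:: Bi; Bi; Bi], true);
([:: Bi; Bi; Ci], [:: Bi; Bi; Bi], false);
([:: Bi; Bi; A], [:: Bi; Bi; Bi], false);
([:: Bi; Bi; A], [:: Bi; Bi; A], false);
([:: Bi; Bi; A], [:: Bi; Bi; A], true);
([:: Bi; Bi; C], [:: Bi; Bi; Ai], false);
([:: Bi; Ci], [:: Bi; Bi; Ai], false);
([:: Bi; Ci; Ai], [:: Bi; Bi; Ai], false);
([:: Bi; Ci; Ai], [:: Bi; Bi; Ai], true);
([:: Bi; Ci; Bi], [:: Bi; Bi; Ai], false);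
([:: Bi; Ci; Ci], [:: Bi; Bi; Ai], false);
([:: Bi; Ci; A], [:: Bi; Bi; Ai], false);
([:: Bi; Ci; B], [:: Bi; Bi; Ai], false);
([:: Bi; A], [:: Bi; A], true);
([:: Bi; A; Bi], [:: Bi; A; Bi], false);
([:: Bi; A; Bi], [:: Bi; A; Bi], true);
([:: Bi; A; Ci], [:: Bi; A; Bi], false);
([:: Bi; A; A], [:: Bi; A; Bi], false);
([:: Bi; A; A], [:: Bi; A; A], false);
([:: Bi; A; A], [:: Bi; A; A], true);
([:: Bi; A; A], [:: Bi; A; B], false);
([:: Bi; A; B], [:: Bi; A; A], false);
([:: Bi; A; B], [:: Bi; A; B], false);
([:: Bi; A; B], [:: Bi; A; B], true);
([:: Bi; A; C], [:: Bi; Bi; Bi], false);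
([:: Bi; A; C], [:: Bi; Bi; Bi], true);
([:: Bi; A; C], [:: Bi; Bi; A], false);
([:: Bi; A; C], [:: Bi; Bi; A], true);
([:: Bi; C], [:: Bi; Ai; Bi], false);
([:: Bi; C; Ai], [:: Bi; Ai; Bi], false);
([:: Bi; C; Bi], [:: Bi; Ai; Bi], false);
([:: Bi; C; Bi], [:: Bi; Ai; Bi], true);
([:: Bi; C; A], [:: Bi; Ai; Bi], false);
([:: Bi; C; B], [:: Bi; Ai; Bi], false);
([:: Bi; C; C], [:: Bi; Ai; Bi], false);
([:: Ci], [:: Bi; Ai; B; A], true);
([:: Ci; Ai], [:: Bi; Ai; B], true);
([:: Ci; Ai; Ai], [:: Bi; Ai; B], false);
([:: Ci; Ai; Bi], [:: Bi; Ai], true);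
([:: Ci; Ai; Bi], [:: Bi; Ai; Ai], false);
([:: Ci; Ai; Bi], [:: Bi; Ai; Ai], true);
([:: Ci; Ai; Bi], [:: Bi; Ai; Bi], false);
([:: Ci; Ai; Bi], [:: Bi; Ai; Bi], true);
([:: Ci; Ai; Ci], [:: Bi; Ai; Ai], false);
([:: Ci; Ai; Ci], [:: Bi; Ai; Ai], true);
([:: Ci; Ai; B], [:: Bi; Ai; B], false);
([:: Ci; Ai; C], [:: Bi; Ai; B], false);
([:: Ci; Bi], [:: Bi; Ai; B], false);
([:: Ci; Bi; Ai], [:: Bi; Ai; B], false);
([:: Ci; Bi; Bi], [:: Bi; Ai; B], false);
([:: Ci; Bi; Ci], [:: Bi; Ai; B], false);
([:: Ci; Bi; A], [:: Bi; Ai; B], false);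
([:: Ci; Bi; C], [:: Bi; Ai; B], false);
([:: Ci; Ci], [:: Bi; Ai; B], false);
([:: Ci; Ci; Ai], [:: Bi; Ai; B], false);
([:: Ci; Ci; Bi], [:: Bi; Ai; B], false);
([:: Ci; Ci; Ci], [:: Bi; Ai; B], false);
([:: Ci; Ci; A], [:: Bi; Ai; B], false);
([:: Ci; Ci; B], [:: Bi; Ai; B], false);
([:: Ci; A], [:: Bi; Ai; B], false);
([:: Ci; A; Bi], [:: Bi; Ai; B], false);
([:: Ci; A; Ci], [:: Bi; Ai; B], false);
([:: Ci; A; A], [:: Bi; Ai; B], false);
([:: Ci; A; B], [:: Bi; Ai; B], false);
([:: Ci; A; C], [:: Bi; Ai; B], false);
([:: Ci; B], [:: Bi; Ai; B], false);
([:: Ci; B; Ai], [:: Bi; Ai; B], false);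
([:: Ci; B; Ci], [:: Bi; Ai; B], false);
([:: Ci; B; A], [:: Bi; Ai; B], false);
([:: Ci; B; B], [:: Bi; Ai; B], false);
([:: Ci; B; C], [:: Bi; Ai; B], false);
([:: A], [:: A], true);
([:: A; Bi], [:: A; Bi], true);
([:: A; Bi; Ai], [:: A; Bi; Ai], false);
([:: A; Bi; Ai], [:: A; Bi; Ai], true);
([:: A; Bi; Bi], [:: A; Bi; Bi], false);
([:: A; Bi; Bi], [:: A; Bi; Bi], true);
([:: A; Bi; Ci], [:: A; Bi; Bi], false);
([:: A; Bi; A], [:: A; Bi; Bi], false);
([:: A; Bi; A], [:: A; Bi; A], false);
([:: A; Bi; A], [:: A; Bi; A], true);
([:: A; Bi; C], [:: A; Bi; Ai], false);
([:: A; Ci], [:: A; Bi; Ai], false);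
([:: A; Ci; Ai], [:: A; Bi; Ai], false);
([:: A; Ci; Ai], [:: A; Bi; Ai], true);
([:: A; Ci; Bi], [:: A; Bi; Ai], false);
([:: A; Ci; Ci], [:: A; Bi; Ai], false);
([:: A; Ci; A], [:: A; Bi; Ai], false);
([:: A; Ci; B], [:: A; Bi; Ai], false);
([:: A; A], [:: A; A], true);
([:: A; A; Bi], [:: A; A; Bi], false);
([:: A; A; Bi], [:: A; A; Bi], true);
([:: A; A; Ci], [:: A; A; Bi], false);
([:: A; A; A], [:: A; A; Bi], false);
([:: A; A; A], [:: A; A; A], false);
([:: A; A; A], [:: A; A; A], true);
([:: A; A; A], [:: A; A; B], false);
([:: A; A; B], [:: A; A; A], false);
([:: A; A; B], [:: A; A; B], false);
([:: A; A; B], [:: A; A; B], true);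
([:: A; A; B], [:: A; B], false);
([:: A; A; B], [:: A; B; A], true);
([:: A; A; C], [:: A; Bi; Bi], false);
([:: A; A; C], [:: A; Bi; Bi], true);
([:: A; A; C], [:: A; Bi; A], false);
([:: A; A; C], [:: A; Bi; A], true);
([:: A; B], [:: A; B], true);
([:: A; B; Ai], [:: A; B; Ai], false);
([:: A; B; Ai], [:: A; B; Ai], true);
([:: A; B; Ci], [:: B], false);
([:: A; B; Ci], [:: B; A], true);
([:: A; B; A], [:: A; A], false);
([:: A; B; A], [:: A; A; B], true);
([:: A; B; A], [:: A; B; A], false);
([:: A; B; A], [:: A; B; A], true);
([:: A; B; A], [:: A; B; B], false);
([:: A; B; B], [:: A; B; Ai], false);
([:: A; B; B], [:: A; B; A], false);
([:: A; B; B], [:: A; B; B], false);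
([:: A; B; B], [:: A; B; B], true);
([:: A; B; C], [:: A; B; Ai], false);
([:: A; C], [:: Bi; A; B], true);
([:: A; C; Ai], [:: Bi; A], false);
([:: A; C; Bi], [:: Bi; Bi], false);
([:: A; C; Bi], [:: Bi; Bi], true);
([:: A; C; Bi], [:: Bi; A], false);
([:: A; C; Bi], [:: Bi; A], true);
([:: A; C; A], [:: Bi; A], false);
([:: A; C; B], [:: Bi; A], false);
([:: A; C; C], [:: Bi; A], false);
([:: B], [:: B], true);
([:: B; Ai], [:: B; Ai], true);
([:: B; Ai; Ai], [:: B; Ai; Ai], false);
([:: B; Ai; Ai], [:: B; Ai; Ai], true);
([:: B; Ai; Bi], [:: B; Ai; Bi], false);
([:: B; Ai; Bi], [:: B; Ai; Bi], true);
([:: B; Ai; Ci], [:: B; Ai; Bi], false);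
([:: B; Ai; B], [:: B; Ai; Ai], false);
([:: B; Ai; B], [:: B; Ai; B], false);
([:: B; Ai; B], [:: B; Ai; B], true);
([:: B; Ai; C], [:: B; Ai; Ai], false);
([:: B; Ci], [:: Ai; B; A], true);
([:: B; Ci; Ai], [:: Ai; Ai], false);
([:: B; Ci; Ai], [:: Ai; Ai], true);
([:: B; Ci; Ai], [:: Ai; B], false);
([:: B; Ci; Ai], [:: Ai; B], true);
([:: B; Ci; Bi], [:: Ai; B], false);
([:: B; Ci; Ci], [:: Ai; B], false);
([:: B; Ci; A], [:: Ai; B], false);
([:: B; Ci; B], [:: Ai; B], false);
([:: B; A], [:: B; A], true);
([:: B; A; Bi], [:: B; A; Bi], false);
([:: B; A; Bi], [:: B; A; Bi], true);
([:: B; A; Ci], [:: B; A; Bi], false);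
([:: B; A; A], [:: B; A; Bi], false);
([:: B; A; A], [:: B; A; A], false);
([:: B; A; A], [:: B; A; A], true);
([:: B; A; A], [:: B; A; B], false);
([:: B; A; B], [:: B; A; A], false);
([:: B; A; B], [:: B; A; B], false);
([:: B; A; B], [:: B; A; B], true);
([:: B; A; B], [:: B; B], false);
([:: B; A; B], [:: B; B; A], true);
([:: B; A; C], [:: A], false);
([:: B; A; C], [:: A; B], true);
([:: B; B], [:: B; B], true);
([:: B; B; Ai], [:: B; B; Ai], false);
([:: B; B; Ai], [:: B; B; Ai], true);
([:: B; B; Ci], [:: B; Ai; Ai], false);
([:: B; B; Ci], [:: B; Ai; Ai], true);
([:: B; B; Ci], [:: B; Ai; B], false);
([:: B; B; Ci], [:: B; Ai; B], true);
([:: B; B; A], [:: B; A], false);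
([:: B; B; A], [:: B; A; B], true);
([:: B; B; A], [:: B; B; A], false);
([:: B; B; A], [:: B; B; A], true);
([:: B; B; A], [:: B; B; B], false);
([:: B; B; B], [:: B; B; Ai], false);
([:: B; B; B], [:: B; B; A], false);
([:: B; B; B], [:: B; B; B], false);
([:: B; B; B], [:: B; B; B], true);
([:: B; B; C], [:: B; B; Ai], false);
([:: B; C], [:: B; Ai; Bi], false);
([:: B; C; Ai], [:: B; Ai; Bi], false);
([:: B; C; Bi], [:: B; Ai; Bi], false);
([:: B; C; Bi], [:: B; Ai; Bi], true);
([:: B; C; A], [:: B; Ai; Bi], false);
([:: B; C; B], [:: B; Ai; Bi], false);
([:: B; C; C], [:: B; Ai; Bi], false);
([:: C], [:: Ai; Bi; A; B], true);
([:: C; Ai], [:: Ai; Bi; A], false);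
([:: C; Ai; Ai], [:: Ai; Bi; A], false);
([:: C; Ai; Bi], [:: Ai; Bi; A], false);
([:: C; Ai; Ci], [:: Ai; Bi; A], false);
([:: C; Ai; B], [:: Ai; Bi; A], false);
([:: C; Ai; C], [:: Ai; Bi; A], false);
([:: C; Bi], [:: Ai; Bi; A], true);
([:: C; Bi; Ai], [:: Ai; Bi], true);
([:: C; Bi; Ai], [:: Ai; Bi; Ai], false);
([:: C; Bi; Ai], [:: Ai; Bi; Ai], true);
([:: C; Bi; Ai], [:: Ai; Bi; Bi], false);
([:: C; Bi; Ai], [:: Ai; Bi; Bi], true);
([:: C; Bi; Bi], [:: Ai; Bi; A], false);
([:: C; Bi; Ci], [:: Ai; Bi; A], false);
([:: C; Bi; A], [:: Ai; Bi; A], false);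
([:: C; Bi; C], [:: Ai; Bi; Bi], false);
([:: C; Bi; C], [:: Ai; Bi; Bi], true);
([:: C; A], [:: Ai; Bi; A], false);
([:: C; A; Bi], [:: Ai; Bi; A], false);
([:: C; A; Ci], [:: Ai; Bi; A], false);
([:: C; A; A], [:: Ai; Bi; A], false);
([:: C; A; B], [:: Ai; Bi; A], false);
([:: C; A; C], [:: Ai; Bi; A], false);
([:: C; B], [:: Ai; Bi; A], false);
([:: C; B; Ai], [:: Ai; Bi; A], false);
([:: C; B; Ci], [:: Ai; Bi; A], false);
([:: C; B; A], [:: Ai; Bi; A], false);
([:: C; B; B], [:: Ai; Bi; A], false);
([:: C; B; C], [:: Ai; Bi; A], false);
([:: C; C], [:: Ai; Bi; A], false);
([:: C; C; Ai], [:: Ai; Bi; A], false);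
([:: C; C; Bi], [:: Ai; Bi; A], false);
([:: C; C; A], [:: Ai; Bi; A], false);
([:: C; C; B], [:: Ai; Bi; A], false);
([:: C; C; C], [:: Ai; Bi; A], false)].
Definition check : bool :=
  all (fun s => all (fun x => allowed s.1.1 x ==>
        (if next s x is Some s' then s' \in S else false)) letters) S
  && all (fun x => ([:: x], foldl push [::] (phi x), true) \in S) letters.

Lemma check_ok : check.
Proof. vm_compute. reflexivity. Qed.

Lemma linvK : involutive linv.
Proof. by case=> i b; rewrite /linv /= negbK. Qed.

Fixpoint sred (st : word) : bool :=
  match st with
  | h :: ((h' :: _) as t) => (h' != linv h) && sred t
  | _ => true
  end.

Lemma push_sred st z : sred st -> sred (push st z).
Proof.
case: st => [|h t] //=.
case: ifP => E.
  by case: t => // h' t' /andP[].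
by move=> H /=; rewrite E H.
Qed.

Lemma fold_sred st l : sred st -> sred (foldl push st l).
Proof. elim: l st => //= z l IH st H; exact/IH/push_sred. Qed.

Lemma push_inv st z : sred st -> push (push st z) (linv z) = st.
Proof.
case: st => [|h t] /=; first by rewrite linvK eqxx.
move=> H; case: ifP => E.
  move/eqP: E => E; subst h.
  case: t H => [|h' t'] //= /andP[H1 _]. by rewrite (negbTE H1).
by rewrite /= linvK eqxx.
Qed.

Lemma winv_cons z y : winv (z :: y) = winv y ++ [:: linv z].
Proof. by rewrite /winv /= rev_cons cats1. Qed.

Lemma winv_cat x y : winv (x ++ y) = winv y ++ winv x.
Proof. by rewrite /winv map_cat rev_cat. Qed.

Lemma fold_cancel st y : sred st -> foldl push st (y ++ winv y) = st.
Proof.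
elim: y st => //= z y IH st H.
rewrite winv_cons catA foldl_cat IH; last exact: push_sred.
exact: push_inv.
Qed.

Lemma phi_linv x : phi (linv x) = winv (phi x).
Proof. by case: x => [[[|[|[|?]]] ?] []]. Qed.

Lemma phiw_cat u v : phiw (u ++ v) = phiw u ++ phiw v.
Proof. by rewrite /phiw map_cat flatten_cat. Qed.

Lemma phiw_winv u : phiw (winv u) = winv (phiw u).
Proof.
elim: u => //= z u IH.
rewrite winv_cons phiw_cat IH /phiw /= cats0 phi_linv.
by rewrite -/(phiw u) winv_cat.
Qed.

Lemma stk_sred w : sred (stk w).
Proof. exact: fold_sred. Qed.

Lemma stk_cat u v : stk (u ++ v) = foldl push (stk u) (phiw v).
Proof. by rewrite /stk phiw_cat foldl_cat. Qed.

Lemma fold_red S l : sred S ->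
  foldl push S l = foldl push S (rev (foldl push [::] l)).
Proof.
move=> HS; elim/last_ind: l => //= l z IH.
rewrite -!cats1 !foldl_cat /= IH.
have HT := fold_sred l (isT : sred [::]).
move: HT; set T := foldl push [::] l => HT.
case: T HT => [|h t] HT /=; first by [].
case: ifP => E.
  move/eqP: E => ->.
  rewrite rev_cons -cats1 foldl_cat /=.
  by have := push_inv (linv z) (fold_sred (rev t) HS); rewrite linvK.
by rewrite !rev_cons -!cats1 !foldl_cat.
Qed.

Lemma fstep_stk u v : fstep u v -> stk u = stk v.
Proof.
case=> p q x.
rewrite !stk_cat /phiw /= -/(phiw q) phi_linv catA foldl_cat fold_cancel //.
exact: stk_sred.
Qed.

Lemma freeeq_stk u v : freeeq u v -> stk u = stk v.
Proof.
elim=> [x y /fstep_stk //|x //|x y _ H //|x y z _ H1 _ H2].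
by rewrite H1 H2.
Qed.

Lemma ncl_stk w : in_nclosure r1 w -> stk w = [::].
Proof.
elim; try by vm_compute.
- move=> u v _ Hu _ Hv.
  by rewrite stk_cat Hu fold_red // -/(stk v) Hv.
- move=> u x _ Hx.
  rewrite stk_cat phiw_cat foldl_cat [foldl push (stk u) (phiw x)]fold_red ?stk_sred // -/(stk x) Hx /=.
  by rewrite phiw_winv /stk -foldl_cat fold_cancel.
- by move=> u v /freeeq_stk ->.
Qed.

Definition check2 : bool :=
  all (fun s => s.1.2 != [::]) S && all (fun p => size p == 4) P10.

Lemma check2_ok : check2.
Proof. vm_compute. reflexivity. Qed.

Definition Inv (w : word) (s : state) : Prop :=
  let: (u, st, fl) := s in
  u = take 3 (rev w) /\ exists Q, stk w = st ++ Q /\ (fl -> Q = [::]).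

Lemma safe_fold st Q y : safe st y -> foldl push (st ++ Q) y = foldl push st y ++ Q.
Proof.
elim: y st => //= z y IH [|h t] //= H.
rewrite -IH //; congr foldl; rewrite /=; by case: ifP.
Qed.

Lemma next_inv w s x s' : Inv w s -> next s x = Some s' -> Inv (rcons w x) s'.
Proof.
case: s => [[u st] fl] [Hu [Q [HQ HfQ]]] /=.
have Hs : stk (rcons w x) = foldl push (st ++ Q) (phi x).
  by rewrite -cats1 stk_cat HQ /phiw /= cats0.
have Hu' : take 3 (x :: u) = take 3 (rev (rcons w x)).
  by rewrite rev_rcons Hu /= take_takel.
case: eqP => // _.
case: fl HfQ => [HfQ|_].
  rewrite HfQ // cats0 in Hs.
  case: ifP => _ [<-]; split => //.
    by exists [::]; rewrite cats0.
  by exists (drop 3 (foldl push st (phi x))); rewrite cat_take_drop.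
case: ifP => // Hsafe [<-]; split => //.
exists (drop 3 (foldl push st (phi x)) ++ Q); split => //.
by rewrite catA cat_take_drop -safe_fold.
Qed.

Lemma letters_all x : x \in letters.
Proof. by case: x => [[[|[|[|?]]] ?] []]. Qed.

Lemma check_step s x : s \in S -> allowed s.1.1 x ->
  exists2 s', next s x = Some s' & s' \in S.
Proof.
have /andP[C1 _] := check_ok.
move=> Hs; move/allP: C1 => /(_ s Hs) /allP /(_ x (letters_all x)) /implyP H /H.
case: (next s x) => // s' ?; by exists s'.
Qed.

Lemma reach w : reduced w -> (forall p, p \in P10 -> ~~ infix p w) -> w != [::] ->
  exists2 s, s \in S & Inv w s.
Proof.
have /andP[C1 C2] := check_ok.
elim/last_ind: w => // w x IH Hred Hpf _.
have Hredw : reduced w.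
  by move=> u v y E; apply: (Hred u (rcons v x) y); rewrite E rcons_cat.
have Hpfw : forall p, p \in P10 -> ~~ infix p w.
  move=> p Hp; apply/negP => Hi; move/negP: (Hpf p Hp); apply.
  exact: (infix_trans Hi (infix_rcons w x)).
case: (altP (w =P [::])) => [->|Hw].
  exists ([:: x], foldl push [::] (phi x), true).
    by move/allP: C2; apply; apply: letters_all.
  split => //; exists [::]; split => //; by rewrite cats0 /stk /phiw /= cats0.
have [s Hs Hinv] := IH Hredw Hpfw Hw.
case: s Hs Hinv => [[u st] fl] Hs Hinv.
have Hal : allowed u x.
  case: Hinv => Hu _; apply/andP; split.
    rewrite Hu; case E: (rev w) => [|h t] //=.
    apply/negP => /eqP Hh; apply: (Hred (rev t) [::] h).
    have -> : w = rcons (rev t) h by rewrite -rev_cons -E revK.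
    by rewrite Hh linvK -!cats1 -catA.
  apply/negP => Hin; move/negP: (Hpf _ Hin); apply.
  have -> : rcons w x = rev (drop 3 (rev w)) ++ rev (x :: u).
    by rewrite Hu -rev_cat /= cat_take_drop -rev_rcons revK.
  exact: suffix_infix.
have [s' E Hs'] := check_step Hs Hal.
by exists s' => //; exact: (next_inv Hinv E).
Qed.

Theorem theorem3p1 (w : word) :
  nontriv_cyc_reduced w -> in_nclosure r1 w ->
  exists p : word, [/\ piece p, size p = 4 & infix p w].
Proof.
case=> Hne Hred _ Hn.
have /andP[C1 C2] := check2_ok.
case: (boolP (has (fun p => infix p w) P10)) => [/hasP [p Hp Hi]|/hasPn Hno].
  exists p; split => //.
  - by case/mapP: Hp => s Hs ->; exists s => //; exact: prefix_take.
  - by apply/eqP; move/allP: C2; apply.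
have [[[u st] fl] Hs [_ [Q [HQ _]]]] := reach Hred Hno (introN eqP Hne).
move/allP: C1 => /(_ _ Hs) /= Hst.
by move: HQ Hst; rewrite ncl_stk //; case: st {Hs}.
Qed.
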